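(* Let $k\ge 3$ and let $n\ge k-1$ be an integer. If $\nu_k(n)=0$, then $n-k+3$ is prime.
   Context: For an integer $k\ge 3$ and a positive integer $n$, $\nu_k(n)$ denotes the number of $k$-tuples of integers $(x_1,\dots,x_k)$ with $1\le x_1\le x_2\le\dots\le x_k$ such that $x_1x_2\cdots x_k+x_1+x_2+\dots+x_k=n$. *)

(* Defs.v *)
From mathcomp Require Import all_boot all_order.
Set Implicit Arguments. Unset Strict Implicit. Unset Printing Implicit Defensive.

Definition is_solution (k n : nat) (x : 'I_k -> nat) : bool :=
  [forall i : 'I_k, 1 <= x i] &&
  [forall i : 'I_k, forall j : 'I_k, (i <= j)%N ==> (x i <= x j)] &&
  ((\prod_(i < k) x i) + (\sum_(i < k) x i) == n).

(* nu k n : number of such k-tuples. Every entry of a solution is <= n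
   (since each x_i <= sum x_i <= n), so enumerating tuples with entries
   in {0,...,n} counts all solutions. *)
Definition nu (k n : nat) : nat :=
  #|[set x : {ffun 'I_k -> 'I_n.+1} | @is_solution k n (fun i => nat_of_ord (x i))]|.

(* Main.v *)
Require Import Defs.
From mathcomp Require Import all_boot all_order.
From mathcomp Require Import zify.

Theorem proposition2 (k n : nat) (hk : 3 <= k) (hn : k - 1 <= n) :
  nu k n = 0 -> prime (n + 3 - k).
Proof.
case: k hk hn => [|[|j]] // hk hn h0.
have m2 : 1 < n + 3 - j.+2 by lia.
case: (boolP (prime (n + 3 - j.+2))) => // npm; exfalso.
set m := n + 3 - j.+2 in m2 npm.
have [a [b [a2 [b2 mab]]]] : exists a b, 1 < a /\ 1 < b /\ m = a * b.
  have pp := pdiv_prime m2.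
  have pd := pdiv_dvd m.
  exists (pdiv m), (m %/ pdiv m); split; first exact: prime_gt1.
  split; last by rewrite mulnC divnK.
  have e := divnK pd.
  case: (m %/ pdiv m) e => [|[|c]] // e.
    by move: m2; rewrite -e.
  by move: npm; rewrite -e mul1n pp.
pose p := minn a b - 1; pose q := maxn a b - 1.
have hpq : (p + 1) * (q + 1) = m.
  rewrite mab /p /q /minn /maxn; case: ltnP => hab; rewrite !subnK //; try lia; exact: mulnC.
have p1 : 1 <= p by rewrite /p; lia.
have pq : p <= q by rewrite /p /q; lia.
pose f (i : 'I_j.+2) : nat := if (i < j)%N then 1 else if i == j :> nat then p else q.
have fn : forall i, f i <= n.
  move=> i; rewrite /f; case: ifP => _; first lia.
  have : q + 1 <= m by rewrite -hpq leq_pmull // addn1.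
  rewrite /m; case: ifP => _; lia.
pose x : {ffun 'I_j.+2 -> 'I_n.+1} := [ffun i => inord (f i)].
have xE : forall i, nat_of_ord (x i) = f i.
  by move=> i; rewrite ffunE inordK // ltnS fn.
have : 0 < nu j.+2 n; last by rewrite h0.
apply/card_gt0P; exists x; rewrite inE /is_solution.
apply/andP; split; first (apply/andP; split).
- apply/forallP => i; rewrite xE /f; case: ifP => _ //; case: ifP => _; lia.
- apply/forallP => i; apply/forallP => i'; apply/implyP => hii.
  rewrite !xE /f; have := ltn_ord i'.
  case: (ltnP i j) => h1; case: (ltnP i' j) => h2;
  case: (@eqP _ (nat_of_ord i) j) => h3; case: (@eqP _ (nat_of_ord i') j) => h4; lia.
- rewrite (eq_bigr (fun i => f i)); last by move=> i _; rewrite xE.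
  rewrite [X in _ + X](eq_bigr (fun i => f i)); last by move=> i _; rewrite xE.
  clear x xE h0 fn.
  rewrite !big_ord_recr.
  have h1 : forall i : 'I_j, f (widen_ord (leqnSn j.+1) (widen_ord (leqnSn j) i)) = 1.
    by move=> i; rewrite /f /= ltn_ord.
  rewrite !(eq_bigr _ (fun i _ => h1 i)).
  rewrite big1_eq sum_nat_const card_ord muln1 /f /= ltnn eqxx.
  rewrite ltnNge leqnSn /= (gtn_eqF (ltnSn j)).
  apply/eqP; rewrite ?mul1n; move: hpq; rewrite /m mulnDl !mulnDr !muln1 ?mul1n.
  set w := p * q; lia.
Qed.
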